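(* Let $p\ge 3$ be a prime and let $G$ be the Tanner graph of the array-based LDPC parity-check matrix $\mathbf{H}(3,p)$. Let $C_u$ be a set of $z$ check nodes with $1\le z\le p$, and let $W$ be the cluster-connecting set corresponding to $C_u$. Then: (a) $|W|\ge \dfrac{(1+2p)z-z^2}{4}$; (b) if all check nodes in $C_u$ belong to the same row group of $\mathbf{H}(3,p)$, then $|W|=zp$; (c) if $3\le z<p$ and every check node $c\in C_u$ lies on at least one cycle of length $6$ in $G$ whose other two check nodes also belong to $C_u$, then $|W|\le zp-z$.
   Context: For a prime $p$, let $\mathbf{I}$ be the $p\times p$ identity matrix and let $\sigma^{s}$ denote the $p\times p$ circulant permutation matrix obtained by cyclically left-shifting the entries of $\mathbf{I}$ by $s \pmod p$ positions ($\sigma^0=\mathbf{I}$). The array-based LDPC matrix $\mathbf{H}(3,p)$ is the $3p\times p^2$ binary block matrix whose $(r,t)$ block, $r\in\{0,1,2\}$, $t\in\{0,\dots,p-1\}$, is $\sigma^{rt}$. Its $r$-th block row (the $p$ rows of blocks $\sigma^{r\cdot 0},\dots,\sigma^{r(p-1)}$) is called row group $r$. Its Tanner graph $G=(V\cup C,E)$ is the bipartite graph with a variable node for each column, a check node for each row, and an edge for each entry equal to $1$. For $C_u\subseteq C$ let $\bar C_u=C\setminus C_u$, let $\mathcal{N}_V(C_u)$ be the set of variable nodes adjacent to some node of $C_u$, and for a variable node $x$ and $D\subseteq C$ let $\mathcal{N}_D(x)$ be the set of neighbors of $x$ in $D$. The cluster-connecting set (CCS) corresponding to $C_u$ is the set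 $W\subseteq \mathcal{N}_V(C_u)$ defined by: $x\in W$ if and only if $\mathcal{N}_{C_u}(x)\neq\emptyset$ and $\mathcal{N}_{\bar C_u}(x)\neq\emptyset$. *)

(* Defs.v *)
From mathcomp Require Import all_boot.
Set Implicit Arguments. Unset Strict Implicit. Unset Printing Implicit Defensive.

(* Check nodes: pairs (r, i) : 'I_3 * 'I_p  = row i of block row (row group) r,
                i.e. matrix row r*p + i.
   Variable nodes: pairs (t, j) : 'I_p * 'I_p = column j of block column t,
                i.e. matrix column t*p + j.
   Block (r,t) is sigma^(r t), where sigma^s is the identity cyclically
   left-shifted by s positions: row i has its 1 in column (i - s) mod p.
   Hence H[(r,i),(t,j)] = 1  iff  i = (j + r t) mod p. *)
Definition check_node (p : nat) := ('I_3 * 'I_p)%type.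
Definition var_node (p : nat) := ('I_p * 'I_p)%type.

Definition adj (p : nat) (c : 'I_3 * 'I_p) (x : 'I_p * 'I_p) : bool :=
  (c.2 : nat) == (x.2 + c.1 * x.1) %% p.

Definition CCS (p : nat) (Cu : {set 'I_3 * 'I_p}) : {set 'I_p * 'I_p} :=
  [set x | [exists c in Cu, adj c x] && [exists c in ~: Cu, adj c x]].

Definition on_6cycle_in (p : nat) (Cu : {set 'I_3 * 'I_p}) (c : 'I_3 * 'I_p) : Prop :=
  exists (c1 c2 : 'I_3 * 'I_p) (x0 x1 x2 : 'I_p * 'I_p),
    [/\ c1 \in Cu, c2 \in Cu,
        [&& c != c1, c != c2 & c1 != c2],
        [&& x0 != x1, x0 != x2 & x1 != x2] &
        [&& adj c x0, adj c1 x0, adj c1 x1, adj c2 x1, adj c2 x2 & adj c x2]].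

(* Main.v *)
Require Import Defs.
From mathcomp Require Import all_boot zify.
Set Implicit Arguments. Unset Strict Implicit. Unset Printing Implicit Defensive.

Lemma shift_inj p k (j1 j2 : 'I_p) : (j1 + k) %% p = (j2 + k) %% p -> j1 = j2.
Proof.
move/eqP; rewrite eqn_modDr !modn_small ?ltn_ord // => /eqP h; exact: val_inj.
Qed.

Lemma mulcancel p k a b : prime p -> 0 < k < p -> a < p -> b < p ->
  k * a = k * b %[mod p] -> a = b.
Proof.
move=> pp /andP[k0 kp].
wlog ab : a b / a <= b.
  move=> H ha hb e; case: (leqP a b) => h; first exact: H.
  by symmetry; apply: H => //; exact: ltnW.
move=> ha hb /esym/eqP; rewrite eqn_mod_dvd; last by rewrite leq_mul2l ab orbT.
rewrite -mulnBr Euclid_dvdM // gtnNdvd //= => hd.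
have : b - a = 0.
  case E: (b - a) => [//|n]; move: hd; rewrite E gtnNdvd //; lia.
lia.
Qed.

Lemma share p (c c' : 'I_3 * 'I_p) (x y : 'I_p * 'I_p) : prime p -> 3 <= p ->
  c != c' -> adj c x -> adj c' x -> adj c y -> adj c' y -> x = y.
Proof.
move=> pp p3.
wlog lt : c c' / c'.1 <= c.1.
  move=> H ne a1 a2 a3 a4; case: (leqP c'.1 c.1) => h; first exact: (H c c').
  by apply: (H c' c) => //; [exact: ltnW| rewrite eq_sym].
case: c c' lt => [r i] [r' i'] /= lt ne.
rewrite /adj /= => /eqP e1 /eqP e2 /eqP e3 /eqP e4.
case: (ltnP r' r) => hr; last first.
  have err : r = r' by apply: val_inj => /=; lia.
  subst r'. have : i = i' by apply: val_inj => /=; rewrite e1 e2.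
  by move=> ei; subst i'; rewrite eqxx in ne.
have E1 : (x.2 + r * x.1) %% p = (y.2 + r * y.1) %% p by rewrite -e1 -e3.
have E2 : (x.2 + r' * x.1) %% p = (y.2 + r' * y.1) %% p by rewrite -e2 -e4.
have hk : r = r' + (r - r') :> nat by lia.
move: E1; rewrite hk !mulnDl !addnA -modnDml E2 modnDml => /eqP.
rewrite eqn_modDl => /eqP E.
have ex1 : x.1 = y.1.
  apply: val_inj; apply: (mulcancel pp _ _ _ E) => //; have := ltn_ord r; lia.
move: E2; rewrite ex1 => E2.
have ex2 : x.2 = y.2 by apply: (shift_inj E2).
by clear -ex1 ex2; case: x y ex1 ex2 => [? ?] [? ?] /= -> ->.
Qed.

Lemma sum_bool (T : finType) (P : pred T) : \sum_x (P x : nat) = #|[set x | P x]|.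
Proof. rewrite -sum1dep_card [RHS]big_mkcond; apply: eq_bigr => x _; by case: (P x). Qed.

Definition nbrs p (x : 'I_p * 'I_p) : {set 'I_3 * 'I_p} := [set c | adj c x].
Definition Nn p (Cu : {set 'I_3 * 'I_p}) x := #|[set c in Cu | adj c x]|.

Lemma card_nbrs p (x : 'I_p * 'I_p) : 0 < p -> #|nbrs x| = 3.
Proof.
move=> p0.
pose g (r : 'I_3) : 'I_3 * 'I_p := (r, Ordinal (ltn_pmod (x.2 + r * x.1) p0)).
have -> : nbrs x = [set g r | r in 'I_3].
  apply/setP => c; rewrite !inE; apply/idP/imsetP.
    move=> /eqP h; exists c.1 => //; case: c h => r i /= h.
    by congr pair; apply: val_inj.
  by case=> r _ ->; rewrite /adj /=.
rewrite card_imset ?card_ord //.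
by move=> r1 r2 [].
Qed.

Lemma NnE p (Cu : {set 'I_3 * 'I_p}) x : Nn Cu x = \sum_(c in Cu) adj c x.
Proof.
rewrite /Nn -sum1dep_card [RHS]big_mkcond /= [LHS]big_mkcond /=.
apply: eq_bigr => c _; by case: (c \in Cu); case: (adj c x).
Qed.

Lemma Nn_le3 p (Cu : {set 'I_3 * 'I_p}) x : 0 < p -> Nn Cu x <= 3.
Proof.
move=> p0; rewrite -(card_nbrs x p0); apply: subset_leq_card.
by apply/subsetP => c; rewrite !inE => /andP[].
Qed.

Lemma CCS_N p (Cu : {set 'I_3 * 'I_p}) x : 0 < p ->
  (x \in CCS Cu) = (0 < Nn Cu x < 3).
Proof.
move=> p0; rewrite /CCS inE.
have -> : [exists c in Cu, adj c x] = (0 < Nn Cu x).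
  apply/existsP/card_gt0P => -[c hc]; exists c; move: hc; by rewrite !inE.
congr andb.
have hs : [set c in Cu | adj c x] \subset nbrs x.
  by apply/subsetP => c; rewrite !inE => /andP[].
apply/existsP/idP.
  case=> c /andP[]; rewrite inE => hc ha.
  have := Nn_le3 Cu x p0; rewrite /Nn ltn_neqAle => ->; rewrite andbT.
  apply/negP => /eqP h3.
  have e : [set c in Cu | adj c x] == nbrs x.
    by rewrite eqEcard hs /= h3 card_nbrs.
  move/eqP: e => e.
  have : c \in nbrs x by rewrite inE.
  by rewrite -e inE (negbTE hc).
move=> hl.
have : ~~ (nbrs x \subset Cu).
  apply/negP => hsub.
  have : [set c in Cu | adj c x] = nbrs x.
    apply/setP => c; rewrite !inE; apply/andP/idP => [[] //|h]; split => //.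
    by apply: (subsetP hsub); rewrite inE.
  by move=> e; move: hl; rewrite /Nn e card_nbrs // ltnn.
case/subsetPn => c; rewrite inE => ha hc; exists c; by rewrite inE hc ha.
Qed.

Lemma cardW p (Cu : {set 'I_3 * 'I_p}) : #|CCS Cu| = \sum_x (x \in CCS Cu : nat).
Proof. by rewrite sum_bool; apply: eq_card => x; rewrite inE. Qed.

Lemma deg_c p (c : 'I_3 * 'I_p) : 0 < p -> \sum_x (adj c x : nat) = p.
Proof.
move=> p0.
rewrite -(pair_big xpredT xpredT (fun t j => (adj c (t, j) : nat))) /=.
rewrite -[RHS]muln1 -[p in p * 1]card_ord -sum_nat_const.
apply: eq_bigr => t _.
rewrite sum_bool.
pose f (j : 'I_p) : 'I_p := Ordinal (ltn_pmod (j + c.1 * t) p0).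
have -> : [set j | adj c (t, j)] = f @^-1: [set c.2].
  apply/setP => j; rewrite !inE /adj /=; apply/eqP/eqP => [h|<-] //; first by apply: val_inj => /=; rewrite h.
rewrite card_preimset ?cards1 //.
move=> j1 j2 [] h; exact: shift_inj h.
Qed.

Lemma sumN p (Cu : {set 'I_3 * 'I_p}) : 0 < p -> \sum_x Nn Cu x = #|Cu| * p.
Proof.
move=> p0.
under eq_bigr => x _ do rewrite NnE.
rewrite exchange_big /= -sum_nat_const.
apply: eq_bigr => c _; exact: deg_c.
Qed.

Lemma sumN2 p (Cu : {set 'I_3 * 'I_p}) : prime p -> 3 <= p ->
  \sum_x Nn Cu x * Nn Cu x <= #|Cu| * (p + #|Cu|).
Proof.
move=> pp p3; have p0 : 0 < p by lia.
under eq_bigr => x _ do rewrite NnE big_distrl /=.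
under eq_bigr => x _ do under eq_bigr => c _ do rewrite big_distrr /=.
rewrite exchange_big /= -sum_nat_const; apply: leq_sum => c hc.
rewrite exchange_big /= (bigD1 c) //=.
apply: leq_add.
  rewrite leq_eqVlt; apply/orP; left; apply/eqP.
  rewrite -[X in _ = X](deg_c c p0).
  by apply: eq_bigr => x _; case: (adj c x).
apply: (@leq_trans (\sum_(c' in Cu) 1)); last by rewrite sum1_card.
rewrite [X in _ <= X]big_mkcond /= big_mkcond /=; apply: leq_sum => c' _.
case: (c' \in Cu) => //=; case: eqP => [//|ne] /=.
have -> : \sum_x (adj c x : nat) * (adj c' x : nat) = \sum_x (adj c x && adj c' x : nat).
  by apply: eq_bigr => x _; case: (adj c x); case: (adj c' x).
rewrite sum_bool; apply/card_le1_eqP => x y; rewrite !inE => /andP[a1 a2] /andP[a3 a4].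
have ne' : c != c' by apply/eqP => e; apply: ne; rewrite e.
exact: esym (share pp p3 ne' a1 a2 a3 a4).
Qed.

Lemma sumMl (T : finType) k (F : T -> nat) : \sum_x k * F x = k * \sum_x F x.
Proof. by rewrite big_distrr. Qed.

Theorem theorem2 (p : nat) (Cu : {set 'I_3 * 'I_p}) :
  prime p -> 3 <= p -> 1 <= #|Cu| <= p ->
  [/\ (* (a) |W| >= ((1+2p)z - z^2)/4 *)
      (1 + 2 * p) * #|Cu| <= 4 * #|CCS Cu| + #|Cu| ^ 2,
      (* (b) all of Cu in one row group => |W| = z p *)
      (exists r : 'I_3, forall c, c \in Cu -> c.1 = r) -> #|CCS Cu| = #|Cu| * p &
      (* (c) *)
      3 <= #|Cu| < p -> (forall c, c \in Cu -> on_6cycle_in Cu c) ->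
        #|CCS Cu| <= #|Cu| * p - #|Cu| ].
Proof.
move=> pp p3 /andP[z1 zp]; have p0 : 0 < p by lia.
have hW := cardW Cu.
have hN := sumN Cu p0.
split.
- have h2 := sumN2 Cu pp p3.
  have pw : 3 * \sum_x Nn Cu x <= 2 * \sum_x (x \in CCS Cu : nat) + \sum_x Nn Cu x * Nn Cu x.
    rewrite -!sumMl -big_split; apply: leq_sum => x _; rewrite CCS_N //.
    have := Nn_le3 Cu x p0; case: (Nn Cu x) => [|[|[|[|n]]]] //.
  rewrite -hW hN in pw.
  have : #|Cu| * #|Cu| <= #|Cu| * p by rewrite leq_mul2l zp orbT.
  nia.
- case=> r hr.
  rewrite hW -hN; apply: eq_bigr => x _; rewrite CCS_N //.
  have : Nn Cu x <= 1.
    apply/card_le1_eqP => c c'; rewrite !inE => /andP[h1 a1] /andP[h2 a2].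
    move: a1 a2; rewrite /adj.
    case: c c' h1 h2 => r1 i1 [r2 i2] h1 h2 /= /eqP a1 /eqP a2.
    have e1 := hr _ h1; have e2 := hr _ h2; simpl in e1, e2; subst r1 r2.
    by congr pair; apply: val_inj => /=; rewrite a1 a2.
  by case: (Nn Cu x) => [|[|n]].
- move=> _ h6.
  have pw : 2 * \sum_x (x \in CCS Cu : nat) + \sum_x Nn Cu x * (1 < Nn Cu x) <= 2 * \sum_x Nn Cu x.
    rewrite -!sumMl -big_split; apply: leq_sum => x _; rewrite CCS_N //.
    have := Nn_le3 Cu x p0; case: (Nn Cu x) => [|[|[|[|n]]]] //.
  have h2 : #|Cu| * 2 <= \sum_x Nn Cu x * (1 < Nn Cu x).
    under eq_bigr => x _ do rewrite {1}NnE big_distrl /=.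
    rewrite exchange_big /= -sum_nat_const; apply: leq_sum => c hc.
    have -> : \sum_x (adj c x : nat) * (1 < Nn Cu x) = \sum_x (adj c x && (1 < Nn Cu x) : nat).
      by apply: eq_bigr => x _; case: (adj c x); case: (1 < Nn Cu x).
    rewrite sum_bool.
    have [c1 [c2 [x0 [x1 [x2 [h1 h2' /and3P[n1 n2 n3] /and3P[m1 m2 m3] hh]]]]]] := h6 c hc.
    move: hh => /and5P[a0 a1 a2 a3 /andP[a4 a5]].
    have N2 : forall d x, d \in Cu -> c != d -> adj c x -> adj d x -> 1 < Nn Cu x.
      move=> d x hd nd ac ad.
      apply: (@leq_trans #|[set c; d]|); first by rewrite cards2 nd.
      apply: subset_leq_card.
      by apply/subsetP => e; rewrite !inE => /orP[] /eqP ->; rewrite ?hc ?hd ?ac ?ad.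
    apply: (@leq_trans #|[set x0; x2]|); first by rewrite cards2 m2.
    apply: subset_leq_card; apply/subsetP => e; rewrite !inE => /orP[] /eqP ->.
      by rewrite a0 (N2 c1 x0).
    by rewrite a5 (N2 c2 x2) // eq_sym // eq_sym n2.
  rewrite -hW hN in pw.
  lia.
Qed.
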